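(* Let $\mathcal D$ be a complete, cocomplete, extremally co-well-powered (extremal epi, mono) category. Then $\mathcal Q(\mathcal D)$ is an (extremal epi, mono) category.
   Context: For a category $\mathcal D$ and an object $d$, $M(d)$ denotes the class of all morphisms with source $d$, quasi-ordered by $\phi_1\ge\phi_2$ iff there is $h$ with $h\phi_1=\phi_2$. A projective filtration on $d$ is a non-empty, directed, saturated subclass $F\subseteq M(d)$ (saturated: $\phi_1\in F$, $\phi_1\ge\phi_2$ imply $\phi_2\in F$). A subclass $S\subseteq F$ is initial if every $\phi\in F$ satisfies $\phi\le\psi$ for some $\psi\in S$. For $f\colon d'\to d$, $f^*(F)=\{\phi f:\phi\in F\}$. $\mathcal P(\mathcal D)$ has objects $(d,F)$, and morphisms $(d_1,F_1)\to(d_2,F_2)$ the morphisms $f\colon d_1\to d_2$ of $\mathcal D$ with $f^*(F_2)\subseteq F_1$. $F$ is reduced if it has an initial subclass of extremal epimorphisms; $\mathcal Q(\mathcal D)$ is the full subcategory of $\mathcal P(\mathcal D)$ of reduced filtered objects. An (extremal epi, mono) category is one in which every morphism factors as an extremal epimorphism followed by a monomorphism and such factorisations have the unique diagonal fill-in property. *)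

(* Defs.v *)
From Stdlib Require Import ProofIrrelevance.

Set Implicit Arguments.

(** * Categories (morphism equality is Leibniz equality) *)
Record Category := {
  Ob :> Type;
  Hom : Ob -> Ob -> Type;
  comp : forall a b c : Ob, Hom b c -> Hom a b -> Hom a c;
  idm : forall a : Ob, Hom a a;
  comp_assoc : forall a b c d (f : Hom a b) (g : Hom b c) (h : Hom c d),
      comp h (comp g f) = comp (comp h g) f;
  comp_id_l : forall a b (f : Hom a b), comp (idm b) f = f;
  comp_id_r : forall a b (f : Hom a b), comp f (idm a) = f }.
Arguments Hom {C} _ _ : rename.
Arguments comp {C a b c} _ _ : rename.
Arguments idm {C} _ : rename.

(** Small categories: objects and hom-sets in [Set] ("small" = [Set]-sized). *)
Record SmallCategory := {
  sOb : Set;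
  sHom : sOb -> sOb -> Set;
  scomp : forall a b c : sOb, sHom b c -> sHom a b -> sHom a c;
  sidm : forall a : sOb, sHom a a;
  scomp_assoc : forall a b c d (f : sHom a b) (g : sHom b c) (h : sHom c d),
      scomp h (scomp g f) = scomp (scomp h g) f;
  scomp_id_l : forall a b (f : sHom a b), scomp (sidm b) f = f;
  scomp_id_r : forall a b (f : sHom a b), scomp f (sidm a) = f }.
Arguments sHom {J} _ _ : rename.
Arguments scomp {J a b c} _ _ : rename.
Arguments sidm {J} _ : rename.

Record Functor (J : SmallCategory) (D : Category) := {
  fobj : sOb J -> Ob D;
  fmap : forall j k : sOb J, sHom j k -> Hom (fobj j) (fobj k);
  fmap_id : forall j, fmap j j (sidm j) = idm (fobj j);
  fmap_comp : forall j k l (u : sHom j k) (v : sHom k l),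
      fmap j l (scomp v u) = comp (fmap k l v) (fmap j k u) }.
Arguments fobj {J D} _ _.
Arguments fmap {J D} _ {j k} _.

Section Basic.
Variable C : Category.

Definition is_limit (J : SmallCategory) (F : Functor J C)
  (L : Ob C) (pi : forall j, Hom L (fobj F j)) : Prop :=
  (forall j k (u : sHom j k), comp (fmap F u) (pi j) = pi k) /\
  (forall (X : Ob C) (s : forall j, Hom X (fobj F j)),
      (forall j k (u : sHom j k), comp (fmap F u) (s j) = s k) ->
      exists! h : Hom X L, forall j, comp (pi j) h = s j).

Definition is_colimit (J : SmallCategory) (F : Functor J C)
  (L : Ob C) (iota : forall j, Hom (fobj F j) L) : Prop :=
  (forall j k (u : sHom j k), comp (iota k) (fmap F u) = iota j) /\
  (forall (X : Ob C) (s : forall j, Hom (fobj F j) X),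
      (forall j k (u : sHom j k), comp (s k) (fmap F u) = s j) ->
      exists! h : Hom L X, forall j, comp h (iota j) = s j).

Definition complete : Prop :=
  forall (J : SmallCategory) (F : Functor J C),
    exists (L : Ob C) (pi : forall j, Hom L (fobj F j)), is_limit F L pi.

Definition cocomplete : Prop :=
  forall (J : SmallCategory) (F : Functor J C),
    exists (L : Ob C) (iota : forall j, Hom (fobj F j) L), is_colimit F L iota.

Definition is_mono {a b : Ob C} (m : Hom a b) : Prop :=
  forall x (g h : Hom x a), comp m g = comp m h -> g = h.

Definition is_epi {a b : Ob C} (e : Hom a b) : Prop :=
  forall x (g h : Hom b x), comp g e = comp h e -> g = h.

Definition is_iso {a b : Ob C} (f : Hom a b) : Prop :=
  exists g : Hom b a, comp g f = idm a /\ comp f g = idm b.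

Definition is_extremal_epi {a b : Ob C} (e : Hom a b) : Prop :=
  is_epi e /\
  forall c (g : Hom a c) (m : Hom c b), e = comp m g -> is_mono m -> is_iso m.

Definition extremally_co_well_powered : Prop :=
  forall d : Ob C,
    exists (I : Set) (c : I -> Ob C) (q : forall i, Hom d (c i)),
      (forall i, is_extremal_epi (q i)) /\
      forall (c' : Ob C) (e : Hom d c'), is_extremal_epi e ->
        exists i (k : Hom (c i) c'), is_iso k /\ comp k (q i) = e.

Definition extremal_epi_mono_category : Prop :=
  (forall a b (f : Hom a b), exists c (e : Hom a c) (m : Hom c b),
      is_extremal_epi e /\ is_mono m /\ f = comp m e) /\
  (forall a b c d (e : Hom a b) (m : Hom c d) (u : Hom a c) (v : Hom b d),
      is_extremal_epi e -> is_mono m -> comp v e = comp m u ->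
      exists! w : Hom b c, comp w e = u /\ comp m w = v).

(** A subclass of M(d) (morphisms with source d) is a predicate. *)
Definition morclass (d : Ob C) := forall c : Ob C, Hom d c -> Prop.

Definition mge {d c1 c2 : Ob C} (phi1 : Hom d c1) (phi2 : Hom d c2) : Prop :=
  exists h : Hom c1 c2, comp h phi1 = phi2.

Definition is_projective_filtration {d : Ob C} (F : morclass d) : Prop :=
  (exists c (phi : Hom d c), F c phi) /\
  (forall c1 (phi1 : Hom d c1) c2 (phi2 : Hom d c2),
      F c1 phi1 -> F c2 phi2 ->
      exists c (psi : Hom d c), F c psi /\ mge psi phi1 /\ mge psi phi2) /\
  (forall c1 (phi1 : Hom d c1) c2 (phi2 : Hom d c2),
      F c1 phi1 -> mge phi1 phi2 -> F c2 phi2).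

Definition is_initial {d : Ob C} (F S : morclass d) : Prop :=
  (forall c phi, S c phi -> F c phi) /\
  (forall c (phi : Hom d c), F c phi ->
      exists c' (psi : Hom d c'), S c' psi /\ mge psi phi).

Definition is_reduced {d : Ob C} (F : morclass d) : Prop :=
  exists S : morclass d, is_initial F S /\
    (forall c (psi : Hom d c), S c psi -> is_extremal_epi psi).

End Basic.

Section QCat.
Variable D : Category.

Record QOb := {
  qobj : Ob D;
  qfilt : @morclass D qobj;
  qfilt_proj : is_projective_filtration qfilt;
  qfilt_red : is_reduced qfilt }.

Record QHom (X Y : QOb) := {
  qmor : Hom (qobj X) (qobj Y);
  qmor_pull : forall c (phi : Hom (qobj Y) c), qfilt Y c phi -> qfilt X c (comp phi qmor) }.

Lemma QHom_eq (X Y : QOb) (f g : QHom X Y) : qmor f = qmor g -> f = g.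
Proof.
  destruct f as [f pf], g as [g pg]; simpl; intros ->.
  f_equal; apply proof_irrelevance.
Qed.

Definition Qcomp (X Y Z : QOb) (g : QHom Y Z) (f : QHom X Y) : QHom X Z.
Proof.
  refine {| qmor := comp (qmor g) (qmor f) |}.
  intros c phi Hphi.
  rewrite comp_assoc.
  apply (qmor_pull f), (qmor_pull g), Hphi.
Defined.

Definition Qid (X : QOb) : QHom X X.
Proof.
  refine {| qmor := idm (qobj X) |}.
  intros c phi Hphi. rewrite comp_id_r. exact Hphi.
Defined.

Definition Qcat : Category.
Proof.
  refine {| Ob := QOb; Hom := QHom; comp := Qcomp; idm := Qid |}.
  - intros; apply QHom_eq; simpl; apply comp_assoc.
  - intros; apply QHom_eq; simpl; apply comp_id_l.
  - intros; apply QHom_eq; simpl; apply comp_id_r.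
Defined.

End QCat.

(* Main.v *)
Require Import Defs.
From Stdlib Require Import ProofIrrelevance.

Inductive Sp : Set := SL | SM | SR.
Definition spH (a b : Sp) : Set :=
  match a, b with
  | SL, SL | SM, SM | SR, SR | SM, SL | SM, SR => unit
  | _, _ => Empty_set end.

Lemma spH_sub a b (f g : spH a b) : f = g.
Proof. destruct a, b; simpl in *; try destruct f; try destruct g; reflexivity. Qed.

Definition spcomp (a b c : Sp) (g : spH b c) (f : spH a b) : spH a c.
Proof.
  destruct a, b, c; simpl in *;
  first [exact tt | exact (match f with end) | exact (match g with end)].
Defined.

Definition spid (a : Sp) : spH a a.
Proof. destruct a; exact tt. Defined.

Definition SpanCat : SmallCategory.
Proof.
  refine {| sOb := Sp; sHom := spH; scomp := spcomp; sidm := spid |};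
  intros; apply spH_sub.
Defined.

Section Push.
Variable C : Category.
Variables (d x c : C) (psi : Hom d x) (e : Hom d c).

Definition spobj (j : Sp) : C := match j with SL => x | SM => d | SR => c end.

Definition spmap (j k : Sp) : spH j k -> Hom (spobj j) (spobj k).
Proof.
  destruct j, k; simpl; intro u;
  first [exact (idm _) | exact psi | exact e | destruct u].
Defined.

Definition SpanF : Functor SpanCat C.
Proof.
  refine (@Build_Functor SpanCat C spobj spmap _ _).
  - intros j; destruct j; reflexivity.
  - intros j k l u v; destruct j, k, l; simpl in u, v;
    try destruct u; try destruct v; cbn;
    rewrite ?comp_id_l, ?comp_id_r; reflexivity.
Defined.

Lemma pushout : cocomplete C ->
  exists P (a : Hom x P) (b : Hom c P), comp a psi = comp b e /\
  (forall t (s1 : Hom x t) (s2 : Hom c t), comp s1 psi = comp s2 e ->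
     exists k : Hom P t, comp k a = s1 /\ comp k b = s2) /\
  (forall t (k k' : Hom P t), comp k a = comp k' a -> comp k b = comp k' b -> k = k').
Proof.
  intros cc. destruct (cc SpanCat SpanF) as [P [iota [Hco Huniv]]].
  assert (HL : comp (iota SL) psi = iota SM) by exact (Hco SM SL tt).
  assert (HR : comp (iota SR) e = iota SM) by exact (Hco SM SR tt).
  exists P, (iota SL), (iota SR). split; [etransitivity; [exact HL|symmetry; exact HR]|split].
  - intros t s1 s2 Hs.
    set (s := fun j => match j return Hom (spobj j) t with
                       | SL => s1 | SM => comp s1 psi | SR => s2 end).
    destruct (Huniv t s) as [h [Hh _]].
    + intros j k u; destruct j, k; simpl in u; try destruct u; cbn;
      rewrite ?comp_id_r; auto.
    + exists h; split; [exact (Hh SL) | exact (Hh SR)].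
  - intros t k k' Ha Hb.
    set (s := fun j => match j return Hom (spobj j) t with
                       | SL => comp k (iota SL) | SM => comp k (iota SM)
                       | SR => comp k (iota SR) end).
    destruct (Huniv t s) as [h [_ Hu]].
    + intros j l u; destruct j, l; simpl in u; try destruct u; cbn;
      rewrite ?comp_id_r; auto; rewrite <- comp_assoc; f_equal; auto.
    + transitivity h; [symmetry|]; apply Hu; intros j; destruct j; cbn; auto.
      * rewrite <- HL, !comp_assoc; f_equal; symmetry; exact Ha.
Qed.
End Push.

Section Main.
Variable D : Category.
Hypothesis cc : cocomplete D.
Hypothesis FI : forall a b c d (e : Hom a b) (m : Hom c d) (u : Hom a c) (v : Hom b d),
      is_extremal_epi D e -> is_mono D m -> comp v e = comp m u ->
      exists! w : Hom b c, comp w e = u /\ comp m w = v.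

Lemma id_extremal (a : D) : is_extremal_epi D (idm a).
Proof.
  split.
  - intros x g h H; rewrite !comp_id_r in H; exact H.
  - intros c g m Hm Hmono. exists g. split.
    + apply Hmono. rewrite comp_assoc, <- Hm, comp_id_l, comp_id_r; reflexivity.
    + symmetry; exact Hm.
Qed.

Definition fullF (x : D) : morclass D x := fun _ _ => True.

Lemma fullF_proj x : is_projective_filtration (fullF x).
Proof.
  split; [|split].
  - exists x, (idm x); exact I.
  - intros c1 p1 c2 p2 _ _. exists x, (idm x). split; [exact I|split].
    + exists p1; apply comp_id_r.
    + exists p2; apply comp_id_r.
  - intros; exact I.
Qed.

Lemma fullF_red x : is_reduced (fullF x).
Proof.
  exists (fun c phi => is_extremal_epi D phi). split; [split|].
  - intros; exact I.
  - intros c phi _. exists x, (idm x). split; [apply id_extremal|].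
    exists phi; apply comp_id_r.
  - auto.
Qed.

Definition FullQ (x : D) : QOb D := Build_QOb (fullF_proj x) (fullF_red x).

Lemma Qmono_Dmono (X Y : QOb D) (m : QHom X Y) :
  @is_mono (Qcat D) X Y m -> is_mono D (qmor m).
Proof.
  intros Hm x g h Hgh.
  set (G := Build_QHom (FullQ x) X g (fun _ _ _ => I)).
  set (H := Build_QHom (FullQ x) X h (fun _ _ _ => I)).
  assert (E : G = H).
  { apply (Hm (FullQ x) G H). apply QHom_eq. simpl. exact Hgh. }
  exact (f_equal (@qmor D _ _) E).
Qed.

Lemma Dmono_Qmono (X Y : QOb D) (m : QHom X Y) :
  is_mono D (qmor m) -> @is_mono (Qcat D) X Y m.
Proof.
  intros Hm W g h Hgh. apply QHom_eq. apply Hm.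
  exact (f_equal (@qmor D _ _) Hgh).
Qed.

Lemma Depi_Qepi (X Y : QOb D) (m : QHom X Y) :
  is_epi D (qmor m) -> @is_epi (Qcat D) X Y m.
Proof.
  intros Hm W g h Hgh. apply QHom_eq. apply Hm.
  exact (f_equal (@qmor D _ _) Hgh).
Qed.

Section Fact.
Variables (X Y : QOb D) (f : QHom X Y) (c : D) (e : Hom (qobj X) c) (m : Hom c (qobj Y)).
Hypotheses (He : is_extremal_epi D e) (Hm : is_mono D m) (Hf : qmor f = comp m e).

Definition Gf : morclass D c := fun t phi => qfilt X t (comp phi e).

Lemma FX_sat t (phi : Hom (qobj X) t) t' (h : Hom t t') :
  qfilt X t phi -> qfilt X t' (comp h phi).
Proof.
  intros H. destruct (qfilt_proj X) as [_ [_ Hs]].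
  apply (Hs _ phi). exact H. exists h; reflexivity.
Qed.

Lemma Gf_proj : is_projective_filtration Gf.
Proof.
  split; [|split].
  - destruct (qfilt_proj Y) as [[t [phi0 H0]] _].
    exists t, (comp phi0 m). unfold Gf. rewrite <- comp_assoc, <- Hf.
    apply (qmor_pull f); exact H0.
  - intros t1 p1 t2 p2 H1 H2. unfold Gf in *.
    destruct (qfilt_proj X) as [_ [Hd _]].
    destruct (Hd _ _ _ _ H1 H2) as [t [psi [Hpsi [[h1 Hh1] [h2 Hh2]]]]].
    destruct (@pushout D _ _ _ psi e cc) as [P [a [b [Hab [Hex _]]]]].
    exists P, b. split; [|split].
    + unfold Gf. rewrite <- Hab. apply FX_sat; exact Hpsi.
    + destruct (Hex _ h1 p1 Hh1) as [k [_ Hk]]. exists k; exact Hk.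
    + destruct (Hex _ h2 p2 Hh2) as [k [_ Hk]]. exists k; exact Hk.
  - intros t1 p1 t2 p2 H1 [h Hh]. unfold Gf in *. subst p2.
    rewrite <- comp_assoc. apply FX_sat; exact H1.
Qed.

Lemma Gf_red : is_reduced Gf.
Proof.
  exists (fun t phi => Gf t phi /\ is_extremal_epi D phi). split; [split|].
  - intros t phi [H _]; exact H.
  - intros t phi Hphi. unfold Gf in Hphi.
    destruct (qfilt_red X) as [SX [[HS1 HS2] HSe]].
    destruct (HS2 _ _ Hphi) as [t' [psi [Hpsi [h Hh]]]].
    pose proof (HS1 _ _ Hpsi) as HFpsi. pose proof (HSe _ _ Hpsi) as [Hepi Hext].
    destruct (@pushout D _ _ _ psi e cc) as [P [a [b [Hab [Hex Hun]]]]].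
    exists P, b. split; [split|].
    + unfold Gf. rewrite <- Hab. apply FX_sat; exact HFpsi.
    + split.
      * intros z g g' Hg. apply Hun; [|exact Hg]. apply Hepi.
        rewrite <- !comp_assoc, Hab, !comp_assoc, Hg; reflexivity.
      * intros W g m' Hb Hm'.
        assert (Hsq : comp a psi = comp m' (comp g e)).
        { rewrite Hab, Hb, comp_assoc; reflexivity. }
        destruct (FI _ _ _ _ _ _ _ _ (conj Hepi Hext) Hm' Hsq) as [w [[Hw1 Hw2] _]].
        destruct (Hex _ w g Hw1) as [k [Hk1 Hk2]].
        exists k. split.
        -- apply Hm'. rewrite comp_assoc, comp_id_r.
           assert (E : comp m' k = idm P).
           { apply Hun; rewrite <- comp_assoc, ?Hk1, ?Hk2, comp_id_l; auto. }
           rewrite E, comp_id_l; reflexivity.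
        -- apply Hun; rewrite <- comp_assoc, ?Hk1, ?Hk2, comp_id_l; auto.
    + destruct (Hex _ h phi Hh) as [k [_ Hk]]. exists k; exact Hk.
  - intros t psi [_ H]; exact H.
Qed.

Definition Zf : QOb D := Build_QOb Gf_proj Gf_red.

Definition Ef : QHom X Zf := Build_QHom X Zf e (fun t phi H => H).

Lemma Mf_pull : forall t (phi : Hom (qobj Y) t), qfilt Y t phi -> qfilt Zf t (comp phi m).
Proof.
  intros t phi H. simpl. unfold Gf. rewrite <- comp_assoc, <- Hf.
  apply (qmor_pull f); exact H.
Qed.

Definition Mf : QHom Zf Y := Build_QHom Zf Y m Mf_pull.

Lemma Ef_extremal : @is_extremal_epi (Qcat D) X Zf Ef.
Proof.
  split.
  - apply Depi_Qepi. exact (proj1 He).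
  - intros W g m' HE Hm'.
    apply Qmono_Dmono in Hm'.
    assert (HE' : e = comp (qmor m') (qmor g)) by exact (f_equal (@qmor D _ _) HE).
    destruct (proj2 He _ _ _ HE' Hm') as [k [Hk1 Hk2]].
    assert (Kp : forall t (phi : Hom (qobj W) t), qfilt W t phi -> qfilt Zf t (comp phi k)).
    { intros t phi H. simpl. unfold Gf. assert (Eg : comp k e = qmor g) by (rewrite HE', comp_assoc; etransitivity; [apply (f_equal (fun z => comp z (qmor g))); exact Hk1 | apply comp_id_l]).
      rewrite <- comp_assoc, Eg.
      apply (qmor_pull g); exact H. }
    exists (Build_QHom Zf W k Kp). split; apply QHom_eq; simpl; assumption.
Qed.

Lemma Mf_mono : @is_mono (Qcat D) Zf Y Mf.
Proof. apply Dmono_Qmono. exact Hm. Qed.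

Lemma f_eq : f = @comp (Qcat D) X Zf Y Mf Ef.
Proof. apply QHom_eq. simpl. exact Hf. Qed.

End Fact.
End Main.

Theorem mainTheorem9 (D : Category) :
  complete D -> cocomplete D -> extremally_co_well_powered D ->
  extremal_epi_mono_category D ->
  extremal_epi_mono_category (Qcat D).
Proof.
  intros _ cc _ [FA FI].
  split.
  - intros X Y f.
    destruct (FA _ _ (qmor f)) as [c [e [m [He [Hm Hf]]]]].
    exists (Zf D cc FI X Y f c e m Hf), (Ef D cc FI X Y f c e m Hf), (Mf D cc FI X Y f c e m Hf).
    split; [eapply Ef_extremal; eauto|split].
    + eapply Mf_mono; eauto.
    + apply f_eq.
  - intros X Y W V e m u v He Hm Hvu.
    destruct (FA _ _ (qmor e)) as [c1 [e1 [m1 [He1 [Hm1 Hf]]]]].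
    pose proof Hf as Hf2.
    pose proof (f_eq D cc FI X Y e c1 e1 m1 Hf) as Hfe.
    assert (HM : is_mono (Qcat D) (Mf D cc FI X Y e c1 e1 m1 Hf)) by (eapply Mf_mono; eauto).
    destruct (proj2 He _ _ _ Hfe HM) as [K [HK1 HK2]].
    assert (HK1' : comp (qmor K) m1 = idm c1) by exact (f_equal (@qmor D _ _) HK1).
    assert (HK2' : comp m1 (qmor K) = idm (qobj Y)) by exact (f_equal (@qmor D _ _) HK2).
    assert (Fact : forall t (phi : Hom (qobj Y) t), qfilt X t (comp phi (qmor e)) -> qfilt Y t phi).
    { intros t phi H. rewrite Hf2, comp_assoc in H.
      pose proof (qmor_pull K t (comp phi m1) H) as H'.
      simpl in H'. rewrite <- comp_assoc in H'.
      replace phi with (comp phi (comp m1 (qmor K))). exact H'.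
      rewrite HK2'; apply comp_id_r. }
    assert (Hk : exists k : Hom (qobj Y) c1, comp k m1 = idm c1 /\ comp m1 k = idm (qobj Y))
      by (exists (qmor K); split; assumption).
    clear HK1 HK2 HK1' HK2' K Hfe HM.
    destruct Hk as [k [HK1' HK2']].
    apply Qmono_Dmono in Hm.
    assert (Hsq : comp (comp (qmor v) m1) e1 = comp (qmor m) (qmor u)).
    { rewrite <- comp_assoc, <- Hf2. exact (f_equal (@qmor D _ _) Hvu). }
    destruct (FI _ _ _ _ _ _ _ _ He1 Hm Hsq) as [w1 [[Hw1 Hw2] _]].
    assert (Ew : comp (comp w1 k) (qmor e) = qmor u).
    { rewrite Hf2. rewrite <- comp_assoc. rewrite (comp_assoc D _ _ _ _ e1 m1 k).
      rewrite HK1', comp_id_l. exact Hw1. }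
    assert (Wp : forall t (phi : Hom (qobj W) t), qfilt W t phi ->
                 qfilt Y t (comp phi (comp w1 k))).
    { intros t phi H. apply Fact. rewrite <- comp_assoc, Ew.
      apply (qmor_pull u); exact H. }
    set (w := (Build_QHom Y W (comp w1 k) Wp : @Hom (Qcat D) Y W)).
    assert (Hw : comp w e = u /\ comp m w = v).
    { split; apply QHom_eq; simpl.
      - exact Ew.
      - rewrite comp_assoc, Hw2, <- comp_assoc, HK2', comp_id_r; reflexivity. }
    exists w. split; [exact Hw|].
    intros w' [Hw' _]. apply (proj1 He). rewrite (proj1 Hw), Hw'; reflexivity.
Qed.
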